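(* There exist a single-item 2-bidder interdependent-values setting whose valuation profile is $c$-single-crossing for some constant $c\ge1$, and a signal profile $\mathbf s$, such that neither the second-price auction for interdependent values nor the generalized Vickrey auction admits a pure Nash equilibrium at $\mathbf s$ under the no-overbidding assumption.
   Context: Single-item interdependent-values setting: bidders have private signals $s_i\in S_i\subseteq\mathbb R_{\ge0}$ and publicly known valuations $v_i(\mathbf s)$, weakly increasing in every coordinate and strictly increasing in $s_i$. $c$-single-crossing ($c\ge1$): for all $i,i'$, $\mathbf s$, $\delta\ge0$, $c\,(v_i(s_i+\delta,\mathbf s_{-i})-v_i(\mathbf s))\ge v_{i'}(s_i+\delta,\mathbf s_{-i})-v_{i'}(\mathbf s)$. Both auctions solicit bids (reported signals) $\mathbf b$ and allocate the item to a bidder with highest $v_i(\mathbf b)$; losers pay nothing. Second-price auction: the winner pays the second-highest value $\max_{j\ne w}v_j(\mathbf b)$. Generalized Vickrey auction: the winner $w$ pays $v_w(b_w^*,\mathbf b_{-w})$, where the critical bid $b_w^*=\min\{b_w: x_w(b_w,\mathbf b_{-w})=1\}$. Utility $u_i(\mathbf b;\mathbf s)=x_i(\mathbf b)v_i(\mathbf s)-p_i(\mathbf b)$. A pure Nash equilibrium at $\mathbf s$ under no-overbidding is a bid profile $\mathbf b\le\mathbf s$ such that no bidder $i$ has $b_i'\le s_i$ with $u_i((b_i',\mathbf b_{-i});\mathbf s)>u_i(\mathbf b;\mathbf s)$. *)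

(* Defs.v *)
From HB Require Import structures.
From mathcomp Require Import all_boot all_order all_algebra.
From mathcomp Require Import boolp classical_sets reals.
Set Implicit Arguments. Unset Strict Implicit. Unset Printing Implicit Defensive.
Import Order.TTheory GRing.Theory Num.Theory.
Local Open Scope ring_scope.
Local Open Scope classical_set_scope.

(* S i : set R is the signal space of bidder i,
   v i : ('I_2 -> R) -> R is the (publicly known) valuation of bidder i. *)

Section Auctions.
Variable R : realType.

Definition profile := 'I_2 -> R.

Definition upd (b : profile) (i : 'I_2) (x : R) : profile :=
  fun j => if j == i then x else b j.

Definition other (i : 'I_2) : 'I_2 := if i == ord0 then ord_max else ord0.

Definition in_dom (S : 'I_2 -> set R) (s : profile) : Prop :=
  forall i, S i (s i).

Definition valid_setting (S : 'I_2 -> set R) (v : 'I_2 -> profile -> R) : Prop :=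
  [/\ (forall i x, S i x -> 0 <= x),
      (forall i, exists x, S i x),
      (forall i j (s : profile) x, in_dom S s -> S j x -> s j <= x ->
          v i s <= v i (upd s j x))
    & (forall i (s : profile) x, in_dom S s -> S i x -> s i < x ->
          v i s < v i (upd s i x))].

Definition single_crossing (S : 'I_2 -> set R) (v : 'I_2 -> profile -> R)
    (c : R) : Prop :=
  forall i i' (s : profile) (d : R), in_dom S s -> 0 <= d -> S i (s i + d) ->
    v i' (upd s i (s i + d)) - v i' s <= c * (v i (upd s i (s i + d)) - v i s).

Definition highest_value_alloc (S : 'I_2 -> set R) (v : 'I_2 -> profile -> R)
    (alloc : profile -> 'I_2) : Prop :=
  forall b, in_dom S b -> forall j, v j b <= v (alloc b) b.

(* payment of the winner w in the second-price auction:
   max_{j <> w} v_j(b), i.e. the value of the other bidder *)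
Definition spa_price (v : 'I_2 -> profile -> R) (b : profile) (w : 'I_2) : R :=
  v (other w) b.

(* critical bid of w: min { b_w in S_w : x_w(b_w, b_{-w}) = 1 }
   (taken as an infimum, which equals the minimum whenever it exists) *)
Definition crit_bid (S : 'I_2 -> set R) (alloc : profile -> 'I_2)
    (b : profile) (w : 'I_2) : R :=
  inf [set t | S w t /\ alloc (upd b w t) = w].

Definition gva_price (S : 'I_2 -> set R) (v : 'I_2 -> profile -> R)
    (alloc : profile -> 'I_2) (b : profile) (w : 'I_2) : R :=
  v w (upd b w (crit_bid S alloc b w)).

Definition utility (v : 'I_2 -> profile -> R) (alloc : profile -> 'I_2)
    (price : profile -> 'I_2 -> R) (i : 'I_2) (b s : profile) : R :=
  if alloc b == i then v i s - price b i else 0.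

Definition PNE_no_overbid (S : 'I_2 -> set R) (v : 'I_2 -> profile -> R)
    (alloc : profile -> 'I_2) (price : profile -> 'I_2 -> R) (s : profile) : Prop :=
  exists b : profile,
    [/\ in_dom S b, (forall i, b i <= s i) &
        forall i t, S i t -> t <= s i ->
          utility v alloc price i (upd b i t) s <= utility v alloc price i b s].

End Auctions.

(* Main.v *)
Require Import Defs.
From HB Require Import structures.
From mathcomp Require Import all_boot all_order all_algebra.
From mathcomp Require Import boolp classical_sets reals.
From mathcomp Require Import lra.
Import Order.TTheory GRing.Theory Num.Theory.
Local Open Scope ring_scope.
Local Open Scope classical_set_scope.

Definition T0 : seq (seq nat) := [:: [:: 1; 1; 4]; [:: 2; 3; 6]; [:: 3; 11; 12]]%N.
Definition T1 : seq (seq nat) := [:: [:: 0; 2; 3]; [:: 3; 6; 9]; [:: 5; 7; 10]]%N.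
Definition tab (i : 'I_2) (p : nat * nat) : nat :=
  nth 0%N (nth [::] (if i == ord0 then T0 else T1) p.1) p.2.
Definition winN (p : nat * nat) : 'I_2 :=
  if (tab ord_max p < tab ord0 p)%N then ord0 else ord_max.
Definition upd2 (p : nat * nat) (i : 'I_2) (k : nat) : nat * nat :=
  if i == ord0 then (k, p.2) else (p.1, k).
Definition critN (i : 'I_2) (p : nat * nat) : nat :=
  if winN (upd2 p i 0) == i then 0%N else if winN (upd2 p i 1) == i then 1%N else 2%N.
Definition uS (i : 'I_2) (p : nat * nat) : int :=
  if winN p == i then (tab i (2, 2)%N)%:Z - (tab (other i) p)%:Z else 0.
Definition uG (i : 'I_2) (p : nat * nat) : int :=
  if winN p == i then (tab i (2, 2)%N)%:Z - (tab i (upd2 p i (critN i p)))%:Z else 0.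

Definition I3 := iota 0 3.
Definition I2 : seq 'I_2 := [:: ord0; ord_max].

Lemma chk_mono : all (fun i => all (fun x => all (fun y => all (fun k =>
  [&& (x <= k)%N ==> (tab i (x, y) <= tab i (k, y))%N,
      (y <= k)%N ==> (tab i (x, y) <= tab i (x, k))%N,
      (x < k)%N ==> (i == ord0) ==> (tab i (x, y) < tab i (k, y))%N &
      (y < k)%N ==> (i == ord_max) ==> (tab i (x, y) < tab i (x, k))%N]) I3) I3) I3) I2.
Proof. by vm_compute. Qed.

Lemma chk_sc : all (fun i => all (fun i' => all (fun x => all (fun y => all (fun k =>
  ((if i == ord0 then x else y) <= k)%N ==>
  (tab i' (upd2 (x, y) i k) + 4 * tab i (x, y) <= tab i' (x, y) + 4 * tab i (upd2 (x, y) i k))%N)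
  I3) I3) I3) I2) I2.
Proof. by vm_compute. Qed.

Lemma chk_tie : all (fun x => all (fun y => tab ord0 (x, y) != tab ord_max (x, y)) I3) I3.
Proof. by vm_compute. Qed.

Lemma chk_crit : all (fun i => all (fun x => all (fun y => all (fun k =>
  [&& (critN i (x, y) < 3)%N,
      (winN (x, y) == i) ==> (winN (upd2 (x, y) i (critN i (x, y))) == i) &
      (winN (upd2 (x, y) i k) == i) ==> (critN i (x, y) <= k)%N]) I3) I3) I3) I2.
Proof. by vm_compute. Qed.

Lemma chk_S : all (fun x => all (fun y => has (fun i => has (fun k =>
  uS i (x, y) < uS i (upd2 (x, y) i k)) I3) I2) I3) I3.
Proof. by vm_compute. Qed.

Lemma chk_G : all (fun x => all (fun y => has (fun i => has (fun k =>
  uG i (x, y) < uG i (upd2 (x, y) i k)) I3) I2) I3) I3.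
Proof. by vm_compute. Qed.

Lemma I2cases (i : 'I_2) : i = ord0 \/ i = ord_max.
Proof.
case: i => [[|[|m]] hm] //.
- by left; apply: val_inj.
- by right; apply: val_inj.
Qed.

Lemma memI2 (i : 'I_2) : i \in I2.
Proof. by case: (I2cases i) => ->; rewrite !inE eqxx ?orbT. Qed.

Lemma memI3 (x : nat) : (x < 3)%N -> x \in I3.
Proof. by rewrite mem_iota. Qed.

Section Real.
Variable R : realType.

Definition SS : 'I_2 -> set R := fun _ => [set r : R | exists2 k, (k < 3)%N & r = k%:R].
Definition idx (r : R) : nat := if r == 0%:R then 0%N else if r == 1%:R then 1%N else 2%N.
Definition vv (i : 'I_2) (b : profile R) : R := (tab i (idx (b ord0), idx (b ord_max)))%:R.
Definition mk (p : nat * nat) : profile R := fun j => if j == ord0 then p.1%:R else p.2%:R.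

Lemma idxK k : (k < 3)%N -> idx (k%:R) = k.
Proof. by rewrite /idx !eqr_nat; case: k => [|[|[|]]]. Qed.

Lemma mk0 p : mk p ord0 = p.1%:R.
Proof. by []. Qed.
Lemma mk1 p : mk p ord_max = p.2%:R.
Proof. by []. Qed.

Lemma vv_mk i x y : (x < 3)%N -> (y < 3)%N -> vv i (mk (x, y)) = (tab i (x, y))%:R.
Proof. by move=> hx hy; rewrite /vv mk0 mk1 /= !idxK. Qed.

Lemma upd_mk x y i k : upd (mk (x, y)) i k%:R = mk (upd2 (x, y) i k).
Proof.
apply/funext => j; rewrite /upd /upd2.
by case: (I2cases i) => ->; case: (I2cases j) => ->.
Qed.

Lemma upd2_bd x y i k : (x < 3)%N -> (y < 3)%N -> (k < 3)%N ->
  ((upd2 (x, y) i k).1 < 3)%N /\ ((upd2 (x, y) i k).2 < 3)%N.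
Proof. by rewrite /upd2; case: (i == ord0). Qed.

Lemma dom_mk b : in_dom SS b -> exists x y, [/\ (x < 3)%N, (y < 3)%N & b = mk (x, y)].
Proof.
move=> hb; case: (hb ord0) => x hx ex; case: (hb ord_max) => y hy ey.
exists x, y; split => //; apply/funext => j.
by case: (I2cases j) => ->.
Qed.

Lemma dom_of x y : (x < 3)%N -> (y < 3)%N -> in_dom SS (mk (x, y)).
Proof. by move=> hx hy j; case: (I2cases j) => ->; [exists x | exists y]. Qed.

Lemma alloc_mk alloc x y : highest_value_alloc SS vv alloc -> (x < 3)%N -> (y < 3)%N ->
  alloc (mk (x, y)) = winN (x, y).
Proof.
move=> hv hx hy.
have hd := dom_of x y hx hy.
have ht : tab ord0 (x, y) != tab ord_max (x, y).
  by move/allP: chk_tie => /(_ x (memI3 x hx)) /allP /(_ y (memI3 y hy)).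
rewrite /winN.
case: (I2cases (alloc (mk (x, y)))) => ha.
- have := hv _ hd ord_max; rewrite ha !vv_mk // ler_nat => hle.
  by rewrite ltn_neqAle hle eq_sym ht.
- have := hv _ hd ord0; rewrite ha !vv_mk // ler_nat => hle.
  by rewrite ltnNge hle.
Qed.


Lemma inf_min (A : set R) m : A m -> (forall t, A t -> m <= t) -> inf A = m.
Proof.
move=> hm hlb; apply/le_anti/andP; split.
- by apply: ge_inf => //; exists m.
- by apply: lb_le_inf; [exists m | ].
Qed.

Lemma crit_mk alloc x y (w : 'I_2) : highest_value_alloc SS vv alloc ->
  (x < 3)%N -> (y < 3)%N -> winN (x, y) = w ->
  crit_bid SS alloc (mk (x, y)) w = (critN w (x, y))%:R.
Proof.
move=> hv hx hy hw.
move/allP: chk_crit => /(_ w (memI2 w)) /allP /(_ x (memI3 x hx)) /allP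
  /(_ y (memI3 y hy)) /allP hc.
have [hc1 hc2 _] := and3P (hc 0%N (memI3 0 isT)).
apply: inf_min.
- split; first by exists (critN w (x, y)).
  have [b1 b2] := upd2_bd x y w (critN w (x, y)) hx hy hc1.
  case e: (upd2 (x, y) w (critN w (x, y))) b1 b2 => [x' y'] b1 b2.
  rewrite upd_mk e alloc_mk //; apply/eqP.
  by move: hc2; rewrite hw eqxx e => /implyP; apply.
- move=> t [[k hk ->] ha].
  have [b1 b2] := upd2_bd x y w k hx hy hk.
  move: ha; case e: (upd2 (x, y) w k) b1 b2 => [x' y'] b1 b2.
  rewrite upd_mk e alloc_mk // => ha.
  have [_ _ h3] := and3P (hc k (memI3 k hk)).
  by rewrite ler_nat; move: h3; rewrite e ha eqxx => /implyP; apply.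
Qed.

Definition s0 : profile R := mk (2, 2)%N.

Lemma utilS alloc x y i : highest_value_alloc SS vv alloc ->
  (x < 3)%N -> (y < 3)%N ->
  utility vv alloc (spa_price vv) i (mk (x, y)) s0 = (uS i (x, y))%:~R.
Proof.
move=> hv hx hy; rewrite /utility /uS alloc_mk //.
case: eqP => [<-|] //.
by rewrite /spa_price /s0 !vv_mk // intrB.
Qed.

Lemma utilG alloc x y i : highest_value_alloc SS vv alloc ->
  (x < 3)%N -> (y < 3)%N ->
  utility vv alloc (gva_price SS vv alloc) i (mk (x, y)) s0 = (uG i (x, y))%:~R.
Proof.
move=> hv hx hy; rewrite /utility /uG alloc_mk //.
case: eqP => [hw|] //.
rewrite /gva_price (crit_mk alloc x y i hv hx hy hw).
move/allP: chk_crit => /(_ i (memI2 i)) /allP /(_ x (memI3 x hx)) /allP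
  /(_ y (memI3 y hy)) /allP hc.
have [hc1 _ _] := and3P (hc 0%N (memI3 0 isT)).
have [b1 b2] := upd2_bd x y i (critN i (x, y)) hx hy hc1.
rewrite upd_mk.
case e: (upd2 (x, y) i (critN i (x, y))) b1 b2 => [x' y'] b1 b2.
by rewrite /s0 !vv_mk // intrB.
Qed.


Lemma valid : valid_setting SS vv.
Proof.
split.
- by move=> i x [k _ ->]; exact: ler0n.
- by move=> i; exists 0; exists 0%N.
- move=> i j s x /dom_mk [a [b [ha hb ->]]] [k hk ->] hle.
  move/allP: chk_mono => /(_ i (memI2 i)) /allP /(_ a (memI3 a ha)) /allP
    /(_ b (memI3 b hb)) /allP /(_ k (memI3 k hk)) /and4P [A B _ _].
  have [b1 b2] := upd2_bd a b j k ha hb hk.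
  rewrite upd_mk; case e: (upd2 (a, b) j k) b1 b2 => [x' y'] b1 b2.
  rewrite !vv_mk // ler_nat.
  move: e hle; rewrite /upd2.
  case: (I2cases j) => -> /= [<- <-]; rewrite ?mk0 ?mk1 ler_nat /= => hle.
  + by move/implyP: A; apply.
  + by move/implyP: B; apply.
- move=> i s x /dom_mk [a [b [ha hb ->]]] [k hk ->] hle.
  move/allP: chk_mono => /(_ i (memI2 i)) /allP /(_ a (memI3 a ha)) /allP
    /(_ b (memI3 b hb)) /allP /(_ k (memI3 k hk)) /and4P [_ _ C D].
  have [b1 b2] := upd2_bd a b i k ha hb hk.
  rewrite upd_mk; case e: (upd2 (a, b) i k) b1 b2 => [x' y'] b1 b2.
  rewrite !vv_mk // ltr_nat.
  move: e hle; rewrite /upd2.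
  case: (I2cases i) C D => -> C D /= [<- <-]; rewrite ?mk0 ?mk1 ltr_nat /= => hle.
  + by move: C => /implyP /(_ hle) /implyP; apply.
  + by move: D => /implyP /(_ hle) /implyP; apply.
Qed.

Lemma sc : single_crossing SS vv 4.
Proof.
move=> i i' s d /dom_mk [a [b [ha hb ->]]] hd [k hk e].
have hle : ((if i == ord0 then a else b) <= k)%N.
  have : mk (a, b) i <= k%:R by rewrite -e lerDl.
  by case: (I2cases i) => -> /=; rewrite ?mk0 ?mk1 ler_nat.
move/allP: chk_sc => /(_ i (memI2 i)) /allP /(_ i' (memI2 i')) /allP
  /(_ a (memI3 a ha)) /allP /(_ b (memI3 b hb)) /allP /(_ k (memI3 k hk))
  /implyP /(_ hle).
have [b1 b2] := upd2_bd a b i k ha hb hk.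
rewrite e upd_mk; case: (upd2 (a, b) i k) b1 b2 => [x' y'] b1 b2.
rewrite !vv_mk //.
rewrite -(ler_nat R) => H. rewrite !natrD in H.
rewrite mulrBr; lra.
Qed.

End Real.

Theorem mainTheorem4 (R : realType) :
  exists (S : 'I_2 -> set R) (v : 'I_2 -> profile R -> R) (c : R) (s : profile R),
    [/\ 1 <= c, valid_setting S v, single_crossing S v c, in_dom S s &
        forall alloc : profile R -> 'I_2, highest_value_alloc S v alloc ->
          ~ PNE_no_overbid S v alloc (spa_price v) s /\
          ~ PNE_no_overbid S v alloc (gva_price S v alloc) s].
Proof.
exists (@SS R), (@vv R), 4, (@s0 R).
split.
- by rewrite ler1n.
- exact: valid.
- exact: sc.
- exact: dom_of.
move=> alloc hv; split => -[b [/dom_mk [x [y [hx hy ->]]] _ hne]].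
- move/allP: chk_S => /(_ x (memI3 x hx)) /allP /(_ y (memI3 y hy)) /hasP [i _] /hasP [k hk].
  have hk3 : (k < 3)%N by rewrite mem_iota in hk.
  have [b1 b2] := upd2_bd x y i k hx hy hk3.
  have := hne i k%:R (ltac:(by exists k)).
  rewrite upd_mk; case e: (upd2 (x, y) i k) b1 b2 => [x' y'] b1 b2.
  rewrite !(utilS _ _ _ _ _ hv) // ler_int => h1 h2.
  have : (k%:R <= s0 R i).
    by case: (I2cases i) => -> /=; rewrite ?mk0 ?mk1 ler_nat /= -ltnS.
  by move/h1; rewrite leNgt h2.
- move/allP: chk_G => /(_ x (memI3 x hx)) /allP /(_ y (memI3 y hy)) /hasP [i _] /hasP [k hk].
  have hk3 : (k < 3)%N by rewrite mem_iota in hk.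
  have [b1 b2] := upd2_bd x y i k hx hy hk3.
  have := hne i k%:R (ltac:(by exists k)).
  rewrite upd_mk; case e: (upd2 (x, y) i k) b1 b2 => [x' y'] b1 b2.
  rewrite !(utilG _ _ _ _ _ hv) // ler_int => h1 h2.
  have : (k%:R <= s0 R i).
    by case: (I2cases i) => -> /=; rewrite ?mk0 ?mk1 ler_nat /= -ltnS.
  by move/h1; rewrite leNgt h2.
Qed.
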